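(* Let $G$ be a finitely generated group and let $H=G/K$, where $K$ is the normal subgroup of $G$ generated by finitely many elements $r_1,\dots,r_m\in G$ together with all values $v_j(g_1,\dots,g_{k_j})$, $(g_1,\dots,g_{k_j})\in G^{k_j}$, of finitely many words $v_1,\dots,v_p$ (each $v_j$ an element of a free group of rank $k_j$). If $G$ has CFQ (respectively ReFQ, respectively co-ReFQ), then so does $H$.
   Context: Let $G$ be generated by a finite set $S$. A marked finite group is a pair $(F,f)$ with $F$ a finite group (given by its multiplication table) and $f:S\to F$ a function. $G$ has CFQ if there is an algorithm which, given $(F,f)$, decides whether $f$ extends to a group homomorphism $G\to F$; ReFQ if there is an algorithm halting exactly on those $(F,f)$ for which $f$ extends; co-ReFQ if there is an algorithm halting exactly on those $(F,f)$ for which $f$ does not extend. These properties are independent of the finite generating set chosen. *)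

(* Defs.v *)
From HB Require Import structures.
From mathcomp Require Import all_boot monoid.

Set Implicit Arguments.
Unset Strict Implicit.
Unset Printing Implicit Defensive.

Inductive prog : Type :=
| PZero
| PSucc
| PProj (i : nat)
| PComp (f : prog) (gs : list prog)
| PRec (f g : prog)
| PMu (f : prog).

(* Fuel-indexed evaluator (arguments with missing entries default to 0).
   [ev k p xs = Some y] means the computation of p on xs terminates with
   output y within fuel k. *)
Fixpoint ev (k : nat) (p : prog) (xs : seq nat) {struct k} : option nat :=
  match k with
  | 0 => None
  | k'.+1 =>
    match p with
    | PZero => Some 0
    | PSucc => Some (head 0 xs).+1
    | PProj i => Some (nth 0 xs i)
    | PComp f gs =>
        let fix evs (gs : seq prog) : option (seq nat) :=
          match gs with
          | [::] => Some [::]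
          | g :: gs' =>
              match ev k' g xs, evs gs' with
              | Some y, Some ys => Some (y :: ys)
              | _, _ => None
              end
          end in
        match evs gs with Some ys => ev k' f ys | None => None end
    | PRec f g =>
        let fix rc (n : nat) : option nat :=
          match n with
          | 0 => ev k' f (behead xs)
          | n'.+1 =>
              match rc n' with
              | Some y => ev k' g [:: n', y & behead xs]
              | None => None
              end
          end in
        rc (head 0 xs)
    | PMu f =>
        let fix srch (j i : nat) : option nat :=
          match j with
          | 0 => None
          | j'.+1 =>
              match ev k' f (i :: xs) with
              | Some 0 => Some i
              | Some _ => srch j' i.+1
              | None => None
              end
          end in
        srch k' 0
    end
  end.

Definition outputs (p : prog) (x y : nat) : Prop :=
  exists k, ev k p [:: x] = Some y.

Definition halts (p : prog) (x : nat) : Prop := exists y, outputs p x y.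

(* A code c decodes (via the bijection CodeSeq.decode : nat -> seq nat)*)
(* into [:: n ; multiplication table (n*n entries, row-major) ;        *)
(*          values f(s_0), ..., f(s_(d-1))]                            *)
(* where the elements of F are 0, ..., n-1.                            *)

Definition mfg_order (c : nat) : nat := head 0 (CodeSeq.decode c).
Definition mfg_mul (c : nat) (a b : nat) : nat :=
  nth 0 (CodeSeq.decode c) (1 + a * mfg_order c + b).
Definition mfg_val (c : nat) (i : nat) : nat :=
  nth 0 (CodeSeq.decode c) (1 + mfg_order c * mfg_order c + i).

Definition valid_mfg (d : nat) (c : nat) : Prop :=
  let n := mfg_order c in
  let mt := mfg_mul c in
  [/\ 0 < n /\ size (CodeSeq.decode c) = 1 + n * n + d,
      (forall a b, a < n -> b < n -> mt a b < n),
      (forall i, i < d -> mfg_val c i < n),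
      (forall a b e, a < n -> b < n -> e < n -> mt (mt a b) e = mt a (mt b e))
    & (exists2 e, e < n &
        forall a, a < n ->
          [/\ mt e a = a, mt a e = a &
              (exists2 b, b < n & mt a b = e /\ mt b a = e)])].

Section Groups.
Local Open Scope group_scope.
Variable G : groupType.

(* a word in k letters: list of (letter, inverted?) *)
Definition word (k : nat) := seq ('I_k * bool).

Definition eval_word (k : nat) (a : 'I_k -> G) (w : word k) : G :=
  foldr (fun ib acc => (if ib.2 then (a ib.1)^-1 else a ib.1) * acc) 1 w.

Definition generates (d : nat) (gen : 'I_d -> G) : Prop :=
  forall g : G, exists w : word d, g = eval_word gen w.

(* g lies in the normal subgroup generated by the elements satisfying X:
   g is a finite product of conjugates of elements of X and their inverses *)
Definition in_normal_closure (X : G -> Prop) (g : G) : Prop :=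
  exists l : seq (G * G * bool),
    (forall t, t \in l -> X t.1.1) /\
    g = foldr (fun t acc =>
                 ((if t.2 then (t.1.1)^-1 else t.1.1) ^ t.1.2) * acc) 1 l.

Definition multiplicative_map (H : groupType) (pi : G -> H) : Prop :=
  forall x y, pi (x * y) = pi x * pi y.

Definition extends (d : nat) (gen : 'I_d -> G) (c : nat) : Prop :=
  exists phi : G -> nat,
    [/\ forall x, phi x < mfg_order c,
        forall x y, phi (x * y) = mfg_mul c (phi x) (phi y)
      & forall i : 'I_d, phi (gen i) = mfg_val c i].

End Groups.

Definition CFQ_wrt (G : groupType) (d : nat) (gen : 'I_d -> G) : Prop :=
  exists p : prog, forall c, valid_mfg d c ->
    exists2 b, outputs p c b & (b = 0 <-> extends gen c).

Definition ReFQ_wrt (G : groupType) (d : nat) (gen : 'I_d -> G) : Prop :=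
  exists p : prog, forall c, valid_mfg d c -> (halts p c <-> extends gen c).

Definition coReFQ_wrt (G : groupType) (d : nat) (gen : 'I_d -> G) : Prop :=
  exists p : prog, forall c, valid_mfg d c -> (halts p c <-> ~ extends gen c).

Definition finitely_generated (G : groupType) : Prop :=
  exists d (gen : 'I_d -> G), generates gen.

Definition CFQ (G : groupType) : Prop :=
  exists d (gen : 'I_d -> G), generates gen /\ CFQ_wrt gen.
Definition ReFQ (G : groupType) : Prop :=
  exists d (gen : 'I_d -> G), generates gen /\ ReFQ_wrt gen.
Definition coReFQ (G : groupType) : Prop :=
  exists d (gen : 'I_d -> G), generates gen /\ coReFQ_wrt gen.

(* Main.v *)
Require Import Defs.
From HB Require Import structures.
From mathcomp Require Import all_boot monoid.
From mathcomp Require Import zify.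
From Stdlib Require Import Classical.
Set Implicit Arguments.
Unset Strict Implicit.
Unset Printing Implicit Defensive.

Definition evsl (k : nat) (xs : seq nat) :=
  fix evs (gs : seq prog) : option (seq nat) :=
          match gs with
          | [::] => Some [::]
          | g :: gs' =>
              match ev k g xs, evs gs' with
              | Some y, Some ys => Some (y :: ys)
              | _, _ => None
              end
          end.

Definition rcf (k : nat) (f g : prog) (t : seq nat) :=
  fix rc (n : nat) : option nat :=
          match n with
          | 0 => ev k f t
          | n'.+1 =>
              match rc n' with
              | Some y => ev k g [:: n', y & t]
              | None => None
              end
          end.

Definition srchf (k : nat) (f : prog) (xs : seq nat) :=
  fix srch (j i : nat) : option nat :=
          match j with
          | 0 => None
          | j'.+1 =>
              match ev k f (i :: xs) with
              | Some 0 => Some i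
              | Some _ => srch j' i.+1
              | None => None
              end
          end.

Lemma ev_comp k f gs xs : ev k.+1 (PComp f gs) xs =
  match evsl k xs gs with Some ys => ev k f ys | None => None end.
Proof. by []. Qed.

Lemma ev_rec k f g n t : ev k.+1 (PRec f g) (n :: t) = rcf k f g t n.
Proof. by []. Qed.

Lemma ev_mu k f xs : ev k.+1 (PMu f) xs = srchf k f xs k 0.
Proof. by []. Qed.

Lemma evsl_cons k xs g gs : evsl k xs (g :: gs) =
  match ev k g xs, evsl k xs gs with
  | Some y, Some ys => Some (y :: ys) | _, _ => None end.
Proof. by []. Qed.
Lemma rcf0 k f g t : rcf k f g t 0 = ev k f t. Proof. by []. Qed.
Lemma rcfS k f g t n : rcf k f g t n.+1 =
  match rcf k f g t n with Some y => ev k g [:: n, y & t] | None => None end.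
Proof. by []. Qed.
Lemma srchfS k f xs j i : srchf k f xs j.+1 i =
  match ev k f (i :: xs) with
  | Some 0 => Some i | Some _ => srchf k f xs j i.+1 | None => None end.
Proof. by []. Qed.

Lemma ev_mono1 k p xs y : ev k p xs = Some y -> ev k.+1 p xs = Some y.
Proof.
elim: k p xs y => [//|k IH] p xs y.
case: p => [||i|f gs|f g|f].
- by [].
- by [].
- by [].
- rewrite !ev_comp.
  have H : forall ys, evsl k xs gs = Some ys -> evsl k.+1 xs gs = Some ys.
    elim: gs => [//|g gs IHg] ys; rewrite !evsl_cons.
    case E1: (ev k g xs) => [a|//]; rewrite (IH _ _ _ E1).
    case E2: (evsl k xs gs) => [b|//].
    by rewrite (IHg _ E2).
  case E: (evsl k xs gs) => [ys|//]; rewrite (H _ E); exact: IH.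
- case: xs => [|n t].
  + have H : forall n y, rcf k f g [::] n = Some y -> rcf k.+1 f g [::] n = Some y.
      elim=> [|n IHn] y'; rewrite ?rcf0 ?rcfS; first exact: IH.
      case E: (rcf k f g [::] n) => [a|//] /IH.
      by rewrite (IHn _ E).
    exact: (H 0 y).
  + rewrite !ev_rec.
    elim: n y => [|n IHn] y'; rewrite ?rcf0 ?rcfS; first exact: IH.
    case E: (rcf k f g t n) => [a|//] /IH.
    by rewrite (IHn _ E).
- rewrite !ev_mu.
  have H : forall j i, srchf k f xs j i = Some y -> srchf k.+1 f xs j.+1 i = Some y.
    elim=> [//|j IHj] i; rewrite !srchfS.
    case E: (ev k f (i :: xs)) => [[|a]|//]; rewrite (IH _ _ _ E) //.
    by move/IHj.
  exact: (H k 0).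
Qed.

Lemma ev_mono k k' p xs y : k <= k' -> ev k p xs = Some y -> ev k' p xs = Some y.
Proof.
move=> /subnK <-; elim: (k' - k) => [//|d IH] H.
by rewrite addSn; apply: ev_mono1; apply: IH.
Qed.

Definition pc p xs y := exists k, ev k p xs = Some y.

Lemma pc_det p xs y y' : pc p xs y -> pc p xs y' -> y = y'.
Proof.
move=> [k1 H1] [k2 H2].
have := ev_mono (leq_maxl k1 k2) H1; rewrite (ev_mono (leq_maxr k1 k2) H2).
by case.
Qed.

Lemma pc_zero xs : pc PZero xs 0. Proof. by exists 1. Qed.
Lemma pc_succ xs : pc PSucc xs (head 0 xs).+1. Proof. by exists 1. Qed.
Lemma pc_proj i xs : pc (PProj i) xs (nth 0 xs i). Proof. by exists 1. Qed.

Fixpoint pcs xs gs ys : Prop :=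
  match gs, ys with
  | [::], [::] => True
  | g :: gs, y :: ys => pc g xs y /\ pcs xs gs ys
  | _, _ => False
  end.

Lemma evsl_mono k k' xs gs ys : k <= k' -> evsl k xs gs = Some ys -> evsl k' xs gs = Some ys.
Proof.
move=> le; elim: gs ys => [//|g gs IH] ys; rewrite !evsl_cons.
case E1: (ev k g xs) => [a|//]; rewrite (ev_mono le E1).
case E2: (evsl k xs gs) => [b|//]; by rewrite (IH _ E2).
Qed.

Lemma pcs_evsl xs gs ys : pcs xs gs ys <-> exists k, evsl k xs gs = Some ys.
Proof.
elim: gs ys => [|g gs IH] [|y ys]; cbn [pcs]; split => //.
- by exists 0.
- by case=> k.
- by case=> k; rewrite evsl_cons; case: (ev k g xs) => //; case: (evsl k xs gs).
- case=> [[k1 H1] /IH [k2 H2]]; exists (maxn k1 k2); rewrite evsl_cons.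
  by rewrite (ev_mono (leq_maxl k1 k2) H1) (evsl_mono (leq_maxr k1 k2) H2).
- case=> k; rewrite evsl_cons.
  case E1: (ev k g xs) => [a|//]; case E2: (evsl k xs gs) => [b|//] [<- <-].
  by split; [exists k | apply/IH; exists k].
Qed.

Lemma pc_comp f gs xs y : pc (PComp f gs) xs y <-> exists ys, pcs xs gs ys /\ pc f ys y.
Proof.
split.
- case=> [[|k]] //; rewrite ev_comp.
  case E: (evsl k xs gs) => [ys|//] H; exists ys; split; last by exists k.
  by apply/pcs_evsl; exists k.
- case=> ys [/pcs_evsl [k1 H1] [k2 H2]]; exists (maxn k1 k2).+1; rewrite ev_comp.
  by rewrite (evsl_mono (leq_maxl k1 k2) H1) (ev_mono (leq_maxr k1 k2) H2).
Qed.

Lemma rcf_mono k k' f g t n y : k <= k' -> rcf k f g t n = Some y -> rcf k' f g t n = Some y.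
Proof.
move=> le; elim: n y => [|n IH] y; rewrite ?rcf0 ?rcfS; first exact: ev_mono.
case E: (rcf k f g t n) => [a|//]; rewrite (IH _ E); exact: ev_mono.
Qed.

Lemma pc_rec0 f g t y : pc (PRec f g) (0 :: t) y <-> pc f t y.
Proof.
split; first by case=> [[|k]] //; rewrite ev_rec rcf0 => H; exists k.
by case=> k H; exists k.+1; rewrite ev_rec rcf0.
Qed.

Lemma pc_recS f g n t y : pc (PRec f g) (n.+1 :: t) y <->
  exists y', pc (PRec f g) (n :: t) y' /\ pc g [:: n, y' & t] y.
Proof.
split.
- case=> [[|k]] //; rewrite ev_rec rcfS.
  case E: (rcf k f g t n) => [a|//] H; exists a; split; last by exists k.
  by exists k.+1; rewrite ev_rec.
- case=> y' [[[|k1]] //]; rewrite ev_rec => H1 [k2 H2].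
  exists (maxn k1 k2).+1; rewrite ev_rec rcfS.
  by rewrite (rcf_mono (leq_maxl k1 k2) H1) (ev_mono (leq_maxr k1 k2) H2).
Qed.

Definition DIV := PMu PSucc.

Lemma DIV_diverges xs y : ~ pc DIV xs y.
Proof.
case=> [[|k]] //; rewrite ev_mu.
suff : forall j i, srchf k PSucc xs j i = None by move->.
elim=> [//|j IH] i; rewrite srchfS.
by case: k IH => [|k] IH //=.
Qed.

Inductive exp := EVar of nat | EZero | ESuc of exp | EPrd of exp | ERec of exp & exp & exp.

Definition scons (x : nat) (f : nat -> nat) : nat -> nat :=
  fun i => if i is i'.+1 then f i' else x.

Fixpoint iterR (z : nat) (sf : nat -> nat -> nat) (n : nat) : nat :=
  if n is n'.+1 then sf n' (iterR z sf n') else z.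

Fixpoint den (e : exp) (env : nat -> nat) : nat :=
  match e with
  | EVar i => env i
  | EZero => 0
  | ESuc e => (den e env).+1
  | EPrd e => (den e env).-1
  | ERec b z s => iterR (den z env) (fun i a => den s (scons i (scons a env))) (den b env)
  end.

Fixpoint fv (e : exp) : nat :=
  match e with
  | EVar i => i.+1
  | EZero => 0
  | ESuc e => fv e
  | EPrd e => fv e
  | ERec b z s => maxn (fv b) (maxn (fv z) (fv s - 2))
  end.

Lemma den_ext e f g : (forall i, i < fv e -> f i = g i) -> den e f = den e g.
Proof.
elim: e f g => [i|| e IH | e IH | b IHb z IHz s IHs] f g /= H.
- exact: H.
- by [].
- by rewrite (IH f g).
- by rewrite (IH f g).
- rewrite (IHb f g); last by move=> i hi; apply: H; rewrite leq_max hi.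
  rewrite (IHz f g); last by move=> i hi; apply: H; rewrite !leq_max hi orbT.
  elim: (den b g) => [//|n IHn] /=; rewrite IHn.
  apply: IHs => -[|[|i]] // hi /=; apply: H.
  rewrite !leq_max; apply/orP; right; apply/orP; right.
  by rewrite ltn_subRL addnC addn2.
Qed.

Definition PPRED := PRec PZero (PProj 0).

Fixpoint compile (e : exp) : prog :=
  match e with
  | EVar i => PProj i
  | EZero => PZero
  | ESuc e => PComp PSucc [:: compile e]
  | EPrd e => PComp PPRED [:: compile e]
  | ERec b z s => PComp (PRec (compile z) (compile s))
                    (compile b :: map PProj (iota 0 (maxn (fv z) (fv s - 2))))
  end.

Lemma pcs_proj xs l : pcs xs (map PProj l) (map (nth 0 xs) l).
Proof. by elim: l => //= i l IH; split => //; apply: pc_proj. Qed.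

Lemma compile_ok e xs : pc (compile e) xs (den e (nth 0 xs)).
Proof.
elim: e xs => [i|| e IH | e IH | b IHb z IHz s IHs] xs /=.
- exact: pc_proj.
- exact: pc_zero.
- apply/pc_comp; exists [:: den e (nth 0 xs)]; split; first by split.
  exact: pc_succ.
- apply/pc_comp; exists [:: den e (nth 0 xs)]; split; first by split.
  case: (den e (nth 0 xs)) => [|n] /=.
    by apply/pc_rec0; apply: pc_zero.
  apply/pc_recS; exists (iterR 0 (fun i _ => i) n); split; last first.
    by apply: pc_proj.
  elim: n => [|n IHn]; first by apply/pc_rec0; apply: pc_zero.
  by apply/pc_recS; exists (iterR 0 (fun i _ => i) n); split => //; apply: pc_proj.
- set N := maxn (fv z) (fv s - 2).
  set t := map (nth 0 xs) (iota 0 N).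
  have Ht : forall i, i < N -> nth 0 t i = nth 0 xs i.
    by move=> i hi; rewrite /t (nth_map 0) ?size_iota // nth_iota.
  apply/pc_comp; exists (den b (nth 0 xs) :: t); split.
    by split; [apply: IHb | apply: pcs_proj].
  elim: (den b (nth 0 xs)) => [|n IHn] /=.
    apply/pc_rec0; rewrite (den_ext (g := nth 0 t)); first exact: IHz.
    by move=> i hi; rewrite Ht // leq_max hi.
  set y := iterR _ _ n.
  apply/pc_recS; exists y; split; first exact: IHn.
  suff -> : den s (scons n (scons y (nth 0 xs))) = den s (nth 0 [:: n, y & t]).
    exact: IHs.
  apply: den_ext => -[|[|i]] // hi /=; rewrite Ht //.
  by rewrite leq_max; apply/orP; right; rewrite ltn_subRL addnC addn2.
Qed.

Fixpoint shc (c : nat) (e : exp) : exp :=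
  match e with
  | EVar i => EVar (if i < c then i else i.+1)
  | EZero => EZero
  | ESuc e => ESuc (shc c e)
  | EPrd e => EPrd (shc c e)
  | ERec b z s => ERec (shc c b) (shc c z) (shc c.+2 s)
  end.

Definition ins (c x : nat) (f : nat -> nat) : nat -> nat :=
  fun i => if i < c then f i else if i == c then x else f i.-1.

Lemma den_eq e f g : f =1 g -> den e f = den e g.
Proof. by move=> H; apply: den_ext => i _; apply: H. Qed.

Lemma eq_iterR z sf sg n : (forall i a, sf i a = sg i a) -> iterR z sf n = iterR z sg n.
Proof. by move=> H; elim: n => //= n ->. Qed.

Lemma den_shc e c x f : den (shc c e) (ins c x f) = den e f.
Proof.
elim: e c f => [i|| e IH | e IH | b IHb z IHz s IHs] c f /=.
- rewrite /ins; case: (ltnP i c) => h; first by rewrite h.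
  by rewrite ltnNge (leqW h) /= gtn_eqF.
- by [].
- by rewrite IH.
- by rewrite IH.
- rewrite IHb IHz; apply: eq_iterR => i a.
  rewrite -(IHs c.+2 (scons i (scons a f))); apply: den_eq => -[|[|j]] //=.
  rewrite /ins /= !ltnS eqSS; case: ltnP => // h1; case: eqP => // h2.
  all: rewrite eqSS.
    by rewrite h2 eqxx.
  move/eqP/negbTE: (h2) => ->.
  by case: j h1 h2 => [|j] //; rewrite leqn0 => /eqP ->.
Qed.

Definition lift e := shc 0 e.
Lemma den_lift e x f : den (lift e) (scons x f) = den e f.
Proof.
rewrite -(den_shc e 0 x f); apply: den_eq => -[|j] //.
Qed.

Fixpoint liftN k e := if k is k'.+1 then lift (liftN k' e) else e.

Definition Add a b := ERec a b (ESuc (EVar 1)).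
Definition Sub a b := ERec b a (EPrd (EVar 1)).
Definition Mul a b := ERec a EZero (Add (EVar 1) (lift (lift b))).
Fixpoint Cst n := if n is n'.+1 then ESuc (Cst n') else EZero.
Definition Sum b body := ERec b EZero (Add (EVar 1) (shc 1 body)).
Definition Pow a b := ERec b (Cst 1) (Mul (EVar 1) (lift (lift a))).
Definition Iter n z step := ERec n z (lift step).
Definition Not a := Sub (Cst 1) a.
Definition Sg a := Not (Not a).
Definition Leb a b := Not (Sub a b).
Definition Eqb a b := Mul (Leb a b) (Leb b a).
Definition And a b := Mul a b.
Definition Imp a b := Add (Not a) b.
Definition Forall b P := Eqb (Sum b (Sg P)) b.
Definition Div a b := Sum a (Leb (Mul (ESuc (EVar 0)) (lift b)) (lift a)).
Definition Mod a b := Sub a (Mul (Div a b) b).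

Fixpoint sumf (n : nat) (F : nat -> nat) : nat :=
  if n is n'.+1 then sumf n' F + F n' else 0.

Section CSem.
Implicit Types (a b : exp) (env : nat -> nat).

Lemma den_rec b z s env : den (ERec b z s) env =
  iterR (den z env) (fun i y => den s (scons i (scons y env))) (den b env).
Proof. by []. Qed.
Lemma iterRS z sf n : iterR z sf n.+1 = sf n (iterR z sf n). Proof. by []. Qed.
Lemma den_var i env : den (EVar i) env = env i. Proof. by []. Qed.
Lemma den_suc e env : den (ESuc e) env = (den e env).+1. Proof. by []. Qed.
Lemma den_prd e env : den (EPrd e) env = (den e env).-1. Proof. by []. Qed.

Lemma den_add env a b : den (Add a b) env = den a env + den b env.
Proof. by rewrite /Add den_rec; elim: (den a env) => // n IH; rewrite iterRS den_suc den_var IH. Qed.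
Lemma den_sub env a b : den (Sub a b) env = den a env - den b env.
Proof.
rewrite /Sub den_rec; elim: (den b env) => [|n IH]; first by rewrite subn0.
by rewrite iterRS den_prd den_var IH subnS.
Qed.
Lemma den_mul env a b : den (Mul a b) env = den a env * den b env.
Proof.
rewrite /Mul den_rec; elim: (den a env) => // n IH.
by rewrite iterRS den_add den_var !den_lift IH mulSn addnC.
Qed.
Lemma den_cst env n : den (Cst n) env = n.
Proof. by elim: n => //= n ->. Qed.
Lemma den_sum env b body : den (Sum b body) env = sumf (den b env) (fun i => den body (scons i env)).
Proof.
rewrite /Sum den_rec; elim: (den b env) => // n IH; rewrite iterRS den_add den_var IH /=.
congr (_ + _).
rewrite -(den_shc body 1 (sumf n (fun i => den body (scons i env))) (scons n env)).
by apply: den_eq => -[|[|j]].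
Qed.
Lemma den_pow env a b : den (Pow a b) env = den a env ^ den b env.
Proof.
rewrite /Pow den_rec; elim: (den b env) => [|n IH]; first by rewrite den_cst.
by rewrite iterRS den_mul den_var !den_lift IH expnS mulnC.
Qed.
Lemma den_iter env n z step : den (Iter n z step) env =
  iter (den n env) (fun x => den step (scons x env)) (den z env).
Proof.
rewrite /Iter den_rec; elim: (den n env) => // k IH; rewrite iterRS IH /=.
rewrite -(den_lift step k); apply: den_eq => -[|[|j]] //.
Qed.
Lemma den_not env a : den (Not a) env = (den a env == 0).
Proof. by rewrite /Not den_sub den_cst; case: (den a env). Qed.
Lemma den_sg env a : den (Sg a) env = (den a env != 0).
Proof. by rewrite /Sg !den_not; case: (den a env). Qed.
Lemma den_leb env a b : den (Leb a b) env = (den a env <= den b env).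
Proof. by rewrite /Leb den_not den_sub subn_eq0. Qed.
Lemma den_eqb env a b : den (Eqb a b) env = (den a env == den b env).
Proof.
rewrite /Eqb den_mul !den_leb eqn_leq.
by case: (_ <= _); case: (_ <= _).
Qed.
Lemma den_and env a b : (den (And a b) env != 0) = (den a env != 0) && (den b env != 0).
Proof. by rewrite /And den_mul muln_eq0 negb_or. Qed.
Lemma den_imp env a b : (den (Imp a b) env != 0) = (den a env != 0) ==> (den b env != 0).
Proof. by rewrite /Imp den_add den_not addn_eq0; case: (den a env); case: (den b env). Qed.

Lemma sumf_le n F : (forall i, F i <= 1) -> sumf n F <= n.
Proof. by move=> H; elim: n => //= n IH; rewrite -addn1 leq_add. Qed.

Lemma sumf_ind n F : (forall i, F i <= 1) -> (sumf n F == n) = [forall i : 'I_n, F i != 0].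
Proof.
move=> H1; elim: n => [|n IH] /=; first by apply/esym/forallP => -[].
apply/eqP/forallP => [E i|A].
- have Fn : F n = 1.
    have := sumf_le n H1; have := H1 n; lia.
  have : sumf n F == n by apply/eqP; lia.
  rewrite IH => /forallP Hf.
  case: (unliftP ord_max i) => [j ->|->]; last by rewrite Fn.
  by have := Hf j; rewrite /= /bump leqNgt ltn_ord add0n.
- have : [forall i : 'I_n, F i != 0].
    by apply/forallP => i; have := A (widen_ord (leqnSn n) i).
  rewrite -IH => /eqP ->; have := A ord_max => /=.
  have := H1 n; move=> h1 h2; lia.
Qed.

Lemma den_forall env b P : (den (Forall b P) env != 0) <->
  (forall i, i < den b env -> den P (scons i env) != 0).
Proof.
rewrite /Forall den_eqb den_sum; set B := den b env.
have -> : sumf B (fun i => den (Sg P) (scons i env)) == B =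
  [forall i : 'I_B, den (Sg P) (scons i env) != 0].
  by apply: sumf_ind => i; rewrite den_sg; case: (_ != _).
split.
- case: forallP => // H _ i hi; have := H (Ordinal hi).
  by rewrite den_sg /=; case: (den P _ != 0).
- move=> H; case: forallP => // -[] [i hi]; by rewrite den_sg (H i hi).
Qed.

Lemma eq_sumf n F G : (forall i, i < n -> F i = G i) -> sumf n F = sumf n G.
Proof.
elim: n => //= n IH H; rewrite IH ?H // => i hi; apply: H; exact: ltnW.
Qed.

Lemma sumf_lt n q : q <= n -> sumf n (fun i => i < q) = q.
Proof.
suff H : sumf n (fun i => i < q) = minn n q by move=> h; rewrite H; lia.
elim: n => [|n IH] /=; first by rewrite min0n.
rewrite IH; case: (ltnP n q) => h /=; lia.
Qed.

Lemma den_div env a b : 0 < den b env -> den (Div a b) env = den a env %/ den b env.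
Proof.
move=> hb; rewrite /Div den_sum.
transitivity (sumf (den a env) (fun i => i < den a env %/ den b env)).
  apply: eq_sumf => i _.
  by rewrite den_leb den_mul den_suc den_var !den_lift leq_divRL.
by rewrite sumf_lt // leq_div.
Qed.

Lemma den_mod env a b : 0 < den b env -> den (Mod a b) env = den a env %% den b env.
Proof. by move=> hb; rewrite /Mod den_sub den_mul den_div // {1}(divn_eq (den a env) (den b env)) addKn. Qed.



End CSem.

Definition v2 (c : nat) := sumf c (fun i => 2 ^ i.+1 %| c).
Definition tl (c : nat) := c %/ 2 ^ (v2 c).+1.

Lemma v2_tl x y : v2 (2 ^ x * y.*2.+1) = x /\ tl (2 ^ x * y.*2.+1) = y.
Proof.
set c := 2 ^ x * _.
have Hv : v2 c = x.
  rewrite /v2 -[RHS](@sumf_lt c x); last first.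
    apply: leq_trans (ltnW (ltn_expl x (ltnSn 1))) _.
    by rewrite /c leq_pmulr.
  apply: eq_sumf => i _.
  rewrite /c Gauss_dvdl ?dvdn_Pexp2l //.
  by apply: coprimeXl; rewrite coprime2n /= odd_double.
split => //; rewrite /tl Hv /c expnS mulnC [2 * _]mulnC divnMA mulnK ?expn_gt0 //.
by rewrite -addn1 -muln2 divnMDl // divn_small // addn0.
Qed.

Lemma decode_step c : 0 < c -> CodeSeq.decode c = v2 c :: CodeSeq.decode (tl c).
Proof.
move=> c0; have E := CodeSeq.decodeK c.
case D: (CodeSeq.decode c) E => [|x s] /= E.
  by move: c0; rewrite -E.
have [H1 H2] := v2_tl x (CodeSeq.code s).
by rewrite -E H1 H2 CodeSeq.codeK.
Qed.

Lemma nth_decode c j : nth 0 (CodeSeq.decode c) j = v2 (iter j tl c).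
Proof.
elim: j c => [|j IH] c.
  case: c => [|c]; first by [].
  by rewrite decode_step.
rewrite iterSr; case: c => [|c].
  have -> : iter j tl (tl 0) = 0.
    have T0 : tl 0 = 0 by rewrite /tl div0n.
    by rewrite T0; elim: (j) => //= i ->.
  by rewrite nth_nil.
by rewrite decode_step // -IH.
Qed.

Definition V2 x := Sum x (Eqb (Mod (lift x) (Pow (Cst 2) (ESuc (EVar 0)))) EZero).
Definition Tl x := Div x (Pow (Cst 2) (ESuc (V2 x))).
Definition Nthd x j := V2 (Iter j x (Tl (EVar 0))).

Lemma den_V2 env x : den (V2 x) env = v2 (den x env).
Proof.
rewrite /V2 den_sum /v2; apply: eq_sumf => i _.
by rewrite den_eqb den_mod den_pow den_cst ?den_suc ?den_var ?den_lift ?expn_gt0.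
Qed.

Lemma den_Tl env x : den (Tl x) env = tl (den x env).
Proof. by rewrite /Tl den_div den_pow den_cst ?den_suc den_V2 ?expn_gt0. Qed.

Lemma den_Nthd env x j : den (Nthd x j) env = nth 0 (CodeSeq.decode (den x env)) (den j env).
Proof.
rewrite /Nthd den_V2 den_iter nth_decode; congr v2.
by apply: eq_iter => y; rewrite den_Tl.
Qed.

Definition OrdE c := Nthd c EZero.
Definition MulE c a b := Nthd c (Add (Cst 1) (Add (Mul a (OrdE c)) b)).
Definition ValE c i := Nthd c (Add (Cst 1) (Add (Mul (OrdE c) (OrdE c)) i)).

Lemma den_OrdE env c : den (OrdE c) env = mfg_order (den c env).
Proof. by rewrite /OrdE den_Nthd /mfg_order; case: CodeSeq.decode. Qed.
Lemma den_MulE env c a b : den (MulE c a b) env = mfg_mul (den c env) (den a env) (den b env).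
Proof. by rewrite /MulE den_Nthd !den_add den_mul den_cst den_OrdE /mfg_mul addnA. Qed.
Lemma den_ValE env c i : den (ValE c i) env = mfg_val (den c env) (den i env).
Proof. by rewrite /ValE den_Nthd !den_add den_mul den_cst den_OrdE /mfg_val addnA. Qed.

Lemma den_forall_val env b P : den (Forall b P) env =
  [forall i : 'I_(den b env), den P (scons i env) != 0].
Proof.
rewrite /Forall den_eqb den_sum sumf_ind; last by move=> i; rewrite den_sg; case: (_ != _).
congr nat_of_bool; apply: eq_forallb => i.
by rewrite den_sg; case: (den P _ != 0).
Qed.

Definition fleast B (P : nat -> bool) := sumf B (fun x => [forall y : 'I_x.+1, ~~ P y]).
Definition LeastE b P := Sum b (Forall (ESuc (EVar 0)) (Not (shc 1 P))).

Lemma den_LeastE env b P : den (LeastE b P) env =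
  fleast (den b env) (fun y => den P (scons y env) != 0).
Proof.
rewrite /LeastE den_sum /fleast; apply: eq_sumf => x _.
rewrite den_forall_val; congr nat_of_bool; apply: eq_forallb => y.
have E : den (shc 1 P) (scons y (scons x env)) = den P (scons y env).
  rewrite -(den_shc P 1 x (scons y env)); apply: den_eq => -[|[|j]] //.
by rewrite den_not E; case: (den P (scons y env)).
Qed.

Lemma fleast_spec B (P : nat -> bool) x0 : x0 < B -> P x0 -> (forall y, y < x0 -> ~~ P y) ->
  fleast B P = x0.
Proof.
move=> hB hP hy.
transitivity (sumf B (fun x => x < x0)); last exact: sumf_lt (ltnW hB).
apply: eq_sumf => x _; congr nat_of_bool.
case: (ltnP x x0) => h.
- apply/forallP => y; apply: hy; have := ltn_ord y; rewrite ltnS => hy'.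
  exact: leq_ltn_trans hy' h.
- have h' : x0 < x.+1 by rewrite ltnS.
  apply/negbTE/negP => /forallP /(_ (Ordinal h')) /=.
  by rewrite hP.
Qed.

Lemma eq_fleast B (P Q : nat -> bool) : P =1 Q -> fleast B P = fleast B Q.
Proof.
move=> H; apply: eq_sumf => x _; congr nat_of_bool; apply: eq_forallb => y; by rewrite H.
Qed.

Section F.
Variable c : nat.
Local Notation n := (mfg_order c).
Local Notation T := (mfg_mul c).
Definition fid := fleast n (fun y => T y y == y).
Definition finv a := fleast n (fun y => T a y == fid).
Definition weval k (a : 'I_k -> nat) (w : word k) : nat :=
  foldr (fun ib acc => T (if ib.2 then finv (a ib.1) else a ib.1) acc) fid w.
Definition bit X x := odd (X %/ 2 ^ x).
Definition closedS d X := bit X fid /\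
  forall x, x < n -> forall i, i < d -> bit X x -> bit X (T (mfg_val c i) x).
Definition inS d a := forall X, X < 2 ^ n -> closedS d X -> bit X a.
End F.

Definition IdE c := LeastE (OrdE c) (Eqb (MulE (lift c) (EVar 0) (EVar 0)) (EVar 0)).
Definition InvE c a := LeastE (OrdE c) (Eqb (MulE (lift c) (lift a) (EVar 0)) (IdE (lift c))).
Definition WordE c k (lt : 'I_k -> exp) (w : word k) :=
  foldr (fun ib acc => MulE c (if ib.2 then InvE c (lt ib.1) else lt ib.1) acc) (IdE c) w.
Definition BitE X x := Mod (Div X (Pow (Cst 2) x)) (Cst 2).
Definition ClosedE d c X := And (BitE X (IdE c))
  (Forall (OrdE c) (Forall (Cst d) (Imp (BitE (lift (lift X)) (EVar 1))
     (BitE (lift (lift X)) (MulE (lift (lift c)) (ValE (lift (lift c)) (EVar 0)) (EVar 1)))))).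
Definition InS d c a := Forall (Pow (Cst 2) (OrdE c))
  (Imp (ClosedE d (lift c) (EVar 0)) (BitE (EVar 0) (lift a))).

Lemma den_IdE env c : den (IdE c) env = fid (den c env).
Proof.
rewrite /IdE den_LeastE den_OrdE /fid; apply: eq_fleast => y.
by rewrite den_eqb den_MulE den_lift !den_var /=; case: (mfg_mul _ y y == y).
Qed.
Lemma den_InvE env c a : den (InvE c a) env = finv (den c env) (den a env).
Proof.
rewrite /InvE den_LeastE den_OrdE /finv; apply: eq_fleast => y.
by rewrite den_eqb den_MulE den_IdE !den_lift !den_var /=; case: (mfg_mul _ _ y == _).
Qed.
Lemma den_WordE env c k lt w : den (@WordE c k lt w) env =
  weval (den c env) (fun l => den (lt l) env) w.
Proof.
elim: w => [|[l b] w IH]; first exact: den_IdE.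
have -> : @WordE c k lt ((l, b) :: w) =
  MulE c (if b then InvE c (lt l) else lt l) (WordE c lt w) by [].
have -> : weval (den c env) (fun l => den (lt l) env) ((l, b) :: w) =
  mfg_mul (den c env) (if b then finv (den c env) (den (lt l) env) else den (lt l) env)
   (weval (den c env) (fun l => den (lt l) env) w) by [].
by rewrite den_MulE IH; case: b => //; rewrite den_InvE.
Qed.
Lemma den_BitE env X x : (den (BitE X x) env != 0) = bit (den X env) (den x env).
Proof.
by rewrite /BitE den_mod ?den_div ?den_pow ?den_cst ?expn_gt0 // modn2 /bit; case: odd.
Qed.
Lemma den_ClosedE env d c X : (den (ClosedE d c X) env != 0) <-> closedS (den c env) d (den X env).
Proof.
rewrite /ClosedE den_and den_BitE den_IdE /closedS.
have E : forall x i, (den (Imp (BitE (lift (lift X)) (EVar 1))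
     (BitE (lift (lift X)) (MulE (lift (lift c)) (ValE (lift (lift c)) (EVar 0)) (EVar 1))))
       (scons i (scons x env)) != 0) =
     bit (den X env) x ==> bit (den X env) (mfg_mul (den c env) (mfg_val (den c env) i) x).
  move=> x i.
  by rewrite den_imp !den_BitE den_MulE den_ValE !den_var !den_lift.
split.
- case/andP=> h1 /den_forall h2; split => // x hx i hi.
  rewrite den_OrdE in h2; move/den_forall: (h2 x hx) => /(_ i).
  rewrite den_cst E => /(_ hi) /implyP; exact.
- case=> h1 h2; rewrite h1; apply/den_forall => x hx; apply/den_forall => i hi.
  rewrite E; apply/implyP.
  rewrite den_OrdE in hx; rewrite den_cst in hi; exact: h2.
Qed.
Lemma den_InS env d c a : (den (InS d c a) env != 0) <-> inS (den c env) d (den a env).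
Proof.
rewrite /InS /inS; split.
- move/den_forall => H X hX hC; have := H X.
  rewrite den_pow den_cst den_OrdE => /(_ hX).
  rewrite den_imp den_BitE den_var den_lift => /implyP; apply.
  by apply/den_ClosedE; rewrite den_lift den_var.
- move=> H; apply/den_forall => X; rewrite den_pow den_cst den_OrdE => hX.
  rewrite den_imp den_BitE den_var den_lift; apply/implyP => /den_ClosedE.
  rewrite den_lift den_var; exact: H.
Qed.

Definition app k (a : nat -> nat) (env : nat -> nat) : nat -> nat :=
  fun i => if i < k then a i else env (i - k).

Fixpoint ForallN k bnd body :=
  if k is k'.+1 then Forall bnd (ForallN k' (lift bnd) body) else Sg body.

Lemma ForallN0 bnd body : ForallN 0 bnd body = Sg body. Proof. by []. Qed.
Lemma ForallNS k bnd body : ForallN k.+1 bnd body = Forall bnd (ForallN k (lift bnd) body).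
Proof. by []. Qed.

Lemma den_ForallN k bnd body env : (den (ForallN k bnd body) env != 0) <->
  (forall a, (forall l, l < k -> a l < den bnd env) -> den body (app k a env) != 0).
Proof.
elim: k bnd env => [|k IH] bnd env.
- rewrite ForallN0 den_sg.
  have Ea : forall a, den body (app 0 a env) = den body env.
    by move=> a; apply: den_eq => i; rewrite /app subn0.
  split => [h a _|h]; first by rewrite Ea; move: h; case: (den body env).
  have := h (fun _ => 0) (fun l (hl : l < 0) => ltac:(by [])); rewrite Ea; by case: (den body env).
- rewrite ForallNS; split.
  + move/den_forall => H a ha.
    have := H (a k) (ha k (ltnSn k)); move/IH => /(_ a).
    rewrite den_lift => H2.
    have -> : den body (app k.+1 a env) = den body (app k a (scons (a k) env)).
      apply: den_eq => i; rewrite /app; case: (ltngtP i k) => h.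
      * have h1 : i < k.+1 by lia.
        by rewrite h1.
      * have h1 : (i < k.+1) = false by lia.
        have h2 : (i < k) = false by lia.
        have h3 : i - k = (i - k.+1).+1 by lia.
        by rewrite ?h1 ?h2 h3.
      * by rewrite ?h ?ltnSn ?ltnn ?subnn.
    by apply: H2 => l hl; apply: ha; exact: ltnW.
  + move=> H; apply/den_forall => x hx; apply/IH => a ha.
    rewrite den_lift in ha.
    pose a' := fun l => if l < k then a l else x.
    have -> : den body (app k a (scons x env)) = den body (app k.+1 a' env).
      apply: den_eq => i; rewrite /app /a'; case: (ltngtP i k) => h.
      * have h1 : i < k.+1 by lia.
        by rewrite ?h ?h1.
      * have h1 : (i < k.+1) = false by lia.
        have h2 : (i < k) = false by lia.
        have h3 : i - k = (i - k.+1).+1 by lia.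
        by rewrite ?h1 ?h2 h3.
      * by rewrite ?h ?ltnSn ?ltnn ?subnn.
    apply: H => l hl; rewrite /a'; case: ifP => // h; exact: ha.
Qed.

Definition AndL (l : seq exp) := foldr And (Cst 1) l.
Lemma den_AndL env (T : eqType) (f : T -> exp) (s : seq T) :
  (den (AndL (map f s)) env != 0) <-> (forall x, x \in s -> den (f x) env != 0).
Proof.
elim: s => [|x s IH].
  have -> : den (AndL (map f [::])) env = 1 by exact: den_cst.
  by [].
rewrite /AndL map_cons; change (foldr And (Cst 1) (map f s)) with (AndL (map f s)).
change (den (And (f x) (AndL (map f s))) env != 0 <->
  (forall x0, x0 \in x :: s -> den (f x0) env != 0)).
rewrite den_and; split.
- case/andP => h1 /IH h2 e'; rewrite inE => /orP [/eqP ->|] //; exact: h2.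
- move=> H; rewrite H ?mem_head //=; apply/IH => e' h; apply: H.
  by rewrite inE h orbT.
Qed.

Definition AllIn k d cK := AndL [seq InS d cK (EVar l) | l <- iota 0 k].

Lemma den_AllIn env k d cK : (den (AllIn k d cK) env != 0) <->
  (forall l, l < k -> inS (den cK env) d (env l)).
Proof.
rewrite /AllIn den_AndL; split.
- move=> H l hl; have := H l; rewrite mem_iota add0n hl => /(_ isT) /den_InS.
  by rewrite den_var.
- move=> H l; rewrite mem_iota add0n => /andP [_ hl].
  apply/den_InS; rewrite den_var; exact: H.
Qed.

Lemma eq_weval c k (a b : 'I_k -> nat) w : a =1 b -> weval c a w = weval c b w.
Proof. by move=> H; elim: w => //= [[l bb] w] IH; rewrite IH H. Qed.

Definition RCheck d (w : word d) :=
  Eqb (WordE (EVar 0) (fun l : 'I_d => ValE (EVar 0) (Cst l)) w) (IdE (EVar 0)).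
Definition VCheck d kj (vj : word kj) :=
  ForallN kj (OrdE (EVar 0)) (Imp (AllIn kj d (EVar kj))
    (Eqb (WordE (EVar kj) (fun l : 'I_kj => EVar l) vj) (IdE (EVar kj)))).
Definition Dexp d m (wr : 'I_m -> word d) p (k : 'I_p -> nat) (v : forall j, word (k j)) :=
  And (AndL [seq RCheck (wr i) | i <- enum 'I_m]) (AndL [seq VCheck d (v j) | j <- enum 'I_p]).

Definition Dsem d m (wr : 'I_m -> word d) p (k : 'I_p -> nat) (v : forall j, word (k j)) c :=
  (forall i, weval c (fun l : 'I_d => mfg_val c l) (wr i) = fid c) /\
  (forall j (a : nat -> nat), (forall l, l < k j -> a l < mfg_order c) ->
     (forall l, l < k j -> inS c d (a l)) -> weval c (fun l : 'I_(k j) => a l) (v j) = fid c).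

Lemma den_RCheck env d w : (den (@RCheck d w) env != 0) =
  (weval (env 0) (fun l : 'I_d => mfg_val (env 0) l) w == fid (env 0)).
Proof.
rewrite /RCheck den_eqb den_WordE den_IdE den_var.
rewrite (@eq_weval _ _ _ (fun l : 'I_d => mfg_val (env 0) l)); last first.
  by move=> l; rewrite den_ValE den_var den_cst.
by case: (weval _ _ _ == _).
Qed.

Lemma den_VCheck env d kj (vj : word kj) : (den (VCheck d vj) env != 0) <->
  (forall a : nat -> nat, (forall l, l < kj -> a l < mfg_order (env 0)) ->
     (forall l, l < kj -> inS (env 0) d (a l)) ->
     weval (env 0) (fun l : 'I_kj => a l) vj = fid (env 0)).
Proof.
rewrite /VCheck den_ForallN den_OrdE den_var.
have Ek : forall a, app kj a env kj = env 0 by move=> a; rewrite /app ltnn subnn.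
have Ea : forall a (l : 'I_kj), app kj a env l = a l by move=> a l; rewrite /app ltn_ord.
split => H a ha.
- move=> hs; have := H a ha; rewrite den_imp den_eqb den_WordE den_IdE !den_var Ek.
  move/implyP => H1.
  have H2 : den (AllIn kj d (EVar kj)) (app kj a env) != 0.
    apply/den_AllIn; rewrite den_var Ek => l hl; rewrite /app hl; exact: hs.
  move: (H1 H2); rewrite (@eq_weval _ _ _ (fun l : 'I_kj => a l)); last first.
    by move=> l; rewrite den_var Ea.
  by case: (weval (env 0) _ vj =P fid (env 0)).
- rewrite den_imp den_eqb den_WordE den_IdE !den_var Ek; apply/implyP => /den_AllIn.
  rewrite den_var Ek => hs.
  rewrite (@eq_weval _ _ _ (fun l : 'I_kj => a l)); last first.
    by move=> l; rewrite den_var Ea.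
  rewrite H //; first by rewrite eqxx.
  by move=> l hl; have := hs l hl; rewrite /app hl.
Qed.

Lemma den_Dexp env d m wr p k v : (den (@Dexp d m wr p k v) env != 0) <-> Dsem wr v (env 0).
Proof.
rewrite /Dexp den_and /Dsem; split.
- case/andP => /den_AndL h1 /den_AndL h2; split.
  + move=> i; have := h1 i; rewrite mem_enum => /(_ isT); rewrite den_RCheck.
    by move/eqP.
  + move=> j; have := h2 j; rewrite mem_enum => /(_ isT) /den_VCheck; exact.
- case=> h1 h2; apply/andP; split; apply/den_AndL.
  + by move=> i _; rewrite den_RCheck h1.
  + move=> j _; apply/den_VCheck; exact: h2.
Qed.

Lemma inj_surj n (f : nat -> nat) (S : nat -> bool) :
  (forall x, x < n -> S x -> f x < n /\ S (f x)) ->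
  (forall x y, x < n -> y < n -> S x -> S y -> f x = f y -> x = y) ->
  forall y, y < n -> S y -> exists z, [/\ z < n, S z & f z = y].
Proof.
move=> Hf Hi y hy Sy.
pose g (x : 'I_n) : 'I_n :=
  if insub (f x) is Some z then z else x.
have gE : forall x : 'I_n, S x -> val (g x) = f x.
  move=> x Sx; rewrite /g; have [h1 _] := Hf x (ltn_ord x) Sx.
  by rewrite insubT.
pose A := [set x : 'I_n | S x].
have sub : [set g x | x in A] \subset A.
  apply/subsetP => z /imsetP [x]; rewrite !inE => Sx ->.
  by rewrite gE //; have [] := Hf x (ltn_ord x) Sx.
have card : #|[set g x | x in A]| = #|A|.
  apply: card_in_imset => x1 x2; rewrite !inE => S1 S2 E.
  apply: val_inj; apply: (Hi _ _ (ltn_ord x1) (ltn_ord x2) S1 S2).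
  by rewrite -(gE _ S1) -(gE _ S2) E.
have EQ : [set g x | x in A] = A by apply/eqP; rewrite eqEcard sub card leqnn.
have : Ordinal hy \in A by rewrite inE.
rewrite -EQ => /imsetP [z]; rewrite inE => Sz Ez.
exists z; split => //; rewrite -gE // -Ez //.
Qed.

Lemma bitmask (P : nat -> Prop) N : exists X, X < 2 ^ N /\
  forall x, x < N -> (bit X x <-> P x).
Proof.
elim: N => [|N [X [hX H]]]; first by exists 0.
have bitlow : forall Y x, x < N -> bit (Y + 2 ^ N) x = bit Y x.
  move=> Y x hx; rewrite /bit divnDr; last by apply: dvdn_exp2l; exact: ltnW.
  rewrite -(subnK (ltnW hx)) expnD mulnK ?expn_gt0 // oddD oddX /=.
  by rewrite subn_eq0 leqNgt hx /= addbF.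
case: (classic (P N)) => PN.
- exists (X + 2 ^ N); split.
    by rewrite expnS mul2n -addnn ltn_add2r.
  move=> x; rewrite ltnS leq_eqVlt => /orP [/eqP ->|hx].
    rewrite /bit divnDr // divnn expn_gt0 /= divn_small // add0n /=.
  by rewrite bitlow //; apply: H.
- exists X; split.
    by rewrite expnS mul2n -addnn; apply: ltn_addr.
  move=> x; rewrite ltnS leq_eqVlt => /orP [/eqP ->|hx]; last exact: H.
  by rewrite /bit divn_small.
Qed.

Section FG.
Variables (d c : nat).
Hypothesis V : valid_mfg d c.
Local Notation n := (mfg_order c).
Local Notation T := (mfg_mul c).

Lemma n_gt0 : 0 < n. Proof. by case: V => [[]]. Qed.
Lemma Tcl a b : a < n -> b < n -> T a b < n. Proof. by case: V => _ H _ _ _; apply: H. Qed.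
Lemma valcl i : i < d -> mfg_val c i < n. Proof. by case: V => _ _ H _ _; apply: H. Qed.
Lemma Tassoc a b e : a < n -> b < n -> e < n -> T (T a b) e = T a (T b e).
Proof. by case: V => _ _ _ H _; apply: H. Qed.

Lemma fid_spec : fid c < n /\ forall a, a < n ->
  [/\ T (fid c) a = a, T a (fid c) = a & exists2 b, b < n & T a b = fid c /\ T b a = fid c].
Proof.
case: V => _ _ _ As [e he H].
suff -> : fid c = e by [].
apply: fleast_spec => //; first by case: (H e he) => ->.
move=> y hy; apply/negP => /eqP Ey.
have yn : y < n by exact: ltn_trans hy he.
case: (H y yn) => _ Hy [b hb [Eb _]].
have : T (T y y) b = T y (T y b) by apply: As.
rewrite Ey Eb; case: (H y yn) => _ -> _ /esym Eq.
by rewrite Eq ltnn in hy.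
Qed.

Lemma fid_lt : fid c < n. Proof. by case: fid_spec. Qed.
Lemma fidL a : a < n -> T (fid c) a = a. Proof. by case: fid_spec => _ H /H []. Qed.
Lemma fidR a : a < n -> T a (fid c) = a. Proof. by case: fid_spec => _ H /H []. Qed.

Lemma cancelL a x y : a < n -> x < n -> y < n -> T a x = T a y -> x = y.
Proof.
move=> ha hx hy E.
case: fid_spec => _ /(_ a ha) [_ _ [b hb [_ Eb]]].
by rewrite -(fidL hx) -(fidL hy) -Eb !Tassoc // E.
Qed.

Lemma idem_fid x : x < n -> T x x = x -> x = fid c.
Proof. by move=> hx E; apply: (@cancelL x) => //; [exact: fid_lt | rewrite fidR]. Qed.

Lemma finv_spec a : a < n -> [/\ finv c a < n, T a (finv c a) = fid c & T (finv c a) a = fid c].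
Proof.
move=> ha; case: fid_spec => _ /(_ a ha) [_ _ [b hb [E1 E2]]].
suff -> : finv c a = b by [].
apply: fleast_spec => //; first by rewrite E1.
move=> y hy; apply/negP => /eqP Ey.
have yn : y < n by exact: ltn_trans hy hb.
have : y = b by apply: (@cancelL a) => //; rewrite Ey E1.
by move=> Eq; rewrite Eq ltnn in hy.
Qed.

Lemma finv_uniq a y : a < n -> y < n -> T a y = fid c -> finv c a = y.
Proof.
move=> ha hy E; case: (finv_spec ha) => h1 h2 _.
by apply: (@cancelL a) => //; rewrite h2.
Qed.

Section Hom.
Variable G : groupType.
Variable phi : G -> nat.
Hypothesis phi_lt : forall x, phi x < n.
Hypothesis phiM : forall x y, phi (x * y)%g = T (phi x) (phi y).

Lemma phi1 : phi 1%g = fid c.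
Proof. by apply: idem_fid => //; rewrite -phiM mulg1. Qed.

Lemma phiV x : phi (x^-1)%g = finv c (phi x).
Proof. by apply/esym/finv_uniq => //; rewrite -phiM mulgV phi1. Qed.

Lemma phi_word k (a : 'I_k -> G) w : phi (eval_word a w) = weval c (fun l => phi (a l)) w.
Proof.
elim: w => [|[l b] w IH]; first exact: phi1.
have -> : eval_word a ((l, b) :: w) = ((if b then (a l)^-1 else a l) * eval_word a w)%g by [].
have -> : weval c (fun l => phi (a l)) ((l, b) :: w) =
  T (if b then finv c (phi (a l)) else phi (a l)) (weval c (fun l => phi (a l)) w) by [].
by rewrite phiM IH; case: b => //; rewrite phiV.
Qed.
End Hom.
End FG.

Lemma weval_cons c kk (a : 'I_kk -> nat) l b w : weval c a ((l, b) :: w) =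
  mfg_mul c (if b then finv c (a l) else a l) (weval c a w).
Proof. by []. Qed.

Section Main.
Local Open Scope group_scope.
Variables (G H : groupType) (pi : G -> H).
Hypothesis piM : multiplicative_map pi.
Hypothesis surj : forall h : H, exists g : G, pi g = h.
Variables (m : nat) (r : 'I_m -> G) (p : nat) (k : 'I_p -> nat) (v : forall j : 'I_p, word (k j)).
Hypothesis ker : forall g : G, pi g = 1 <->
     in_normal_closure
       (fun x : G => (exists i : 'I_m, x = r i) \/
                     (exists (j : 'I_p) (a : 'I_(k j) -> G), x = eval_word a (v j)))
       g.
Variables (d : nat) (gen : 'I_d -> G).
Hypothesis Hgen : generates gen.
Variable wr : 'I_m -> word d.
Hypothesis Hwr : forall i, r i = eval_word gen (wr i).

Definition genH := fun i => pi (gen i).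

Lemma pi1 : pi 1 = 1.
Proof. by apply: (@mulgI _ (pi 1)); rewrite mulg1 -piM mulg1. Qed.
Lemma piV x : pi x^-1 = (pi x)^-1.
Proof. by apply/esym/mulg1_eq; rewrite -piM mulgV pi1. Qed.
Lemma pi_word kk (a : 'I_kk -> G) w : pi (eval_word a w) = eval_word (fun l => pi (a l)) w.
Proof.
elim: w => [|[l b] w IH]; first exact: pi1.
have E : forall (K : groupType) (a : 'I_kk -> K),
  eval_word a ((l, b) :: w) = (if b then (a l)^-1 else a l) * eval_word a w by [].
by rewrite !E piM IH; case: (b) => //; rewrite piV.
Qed.

Lemma genH_gen : generates genH.
Proof.
move=> h; case: (surj h) => g <-; case: (Hgen g) => w ->.
by exists w; rewrite pi_word.
Qed.

Lemma single_nc (Xp : G -> Prop) x : Xp x -> in_normal_closure Xp x.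
Proof.
move=> hx; exists [:: (x, 1, false)]; split.
  by move=> t; rewrite inE => /eqP ->.
by rewrite /= conjg1 mulg1.
Qed.

Lemma r_ker i : pi (r i) = 1.
Proof. by apply/ker; apply: single_nc; left; exists i. Qed.
Lemma v_ker j a : pi (eval_word a (v j)) = 1.
Proof. by apply/ker; apply: single_nc; right; exists j, a. Qed.

Lemma ext_fwd c : valid_mfg d c -> extends genH c -> extends gen c /\ Dsem wr v c.
Proof.
move=> Vc [phiH [hlt hM hgen]].
pose phiG := fun x => phiH (pi x).
have gM : forall x y, phiG (x * y) = mfg_mul c (phiG x) (phiG y).
  by move=> x y; rewrite /phiG piM hM.
have glt : forall x, phiG x < mfg_order c by move=> x; exact: hlt.
split; first by exists phiG; split => // i; exact: hgen.
split.
- move=> i; rewrite -(phi1 Vc hlt hM) -(r_ker i) Hwr.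
  rewrite -/(phiG _) (phi_word Vc glt gM); apply: eq_weval => l.
  by rewrite /phiG hgen.
- move=> j a ha hs.
  have [X0 [hX0 HX0]] := bitmask (fun x => exists g, phiG g = x) (mfg_order c).
  have cl : closedS c d X0.
    split.
      apply/HX0; first exact: fid_lt Vc.
      by exists 1; have := phi1 Vc glt gM.
    move=> x hx i hi /(HX0 _ hx) [g Eg]; apply/HX0; first (apply: (Tcl Vc) => //; have := valcl Vc hi; exact).
    exists (gen (Ordinal hi) * g); rewrite gM Eg; congr mfg_mul; exact: (hgen (Ordinal hi)).
  have Hex : forall l : 'I_(k j), exists g, phiG g == a l.
    move=> l; have hl := ltn_ord l.
    have := hs l hl X0 hX0 cl; move/(HX0 _ (ha l hl)) => [g Eg].
    by exists g; rewrite Eg.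
  pose gg := fun l => xchoose (Hex l).
  transitivity (weval c (fun l => phiG (gg l)) (v j)).
    by apply: eq_weval => l; rewrite (eqP (xchooseP (Hex l))).
  rewrite -(phi_word Vc glt gM) /phiG v_ker; have := phi1 Vc hlt hM; exact.
Qed.

Lemma weval_lt c kk (a : 'I_kk -> nat) w : valid_mfg d c -> (forall l, a l < mfg_order c) ->
  weval c a w < mfg_order c.
Proof.
move=> Vc ha; elim: w => [|[l b] w IH]; first exact: fid_lt Vc.
rewrite weval_cons; apply: (Tcl Vc); last exact: IH.
case: (b); last exact: ha.
by case: (finv_spec Vc (ha l)).
Qed.

Lemma inS_word c w : valid_mfg d c -> inS c d (weval c (fun l : 'I_d => mfg_val c l) w).
Proof.
move=> Vc X hX cl.
have vl : forall l : 'I_d, mfg_val c l < mfg_order c by move=> l; have := valcl Vc (ltn_ord l); exact.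
elim: w => [|[l b] w IH]; first by case: cl.
have yl := weval_lt w Vc vl.
set y := weval c _ w in IH yl *.
have -> : weval c (fun l : 'I_d => mfg_val c l) ((l, b) :: w) =
  mfg_mul c (if b then finv c (mfg_val c l) else mfg_val c l) y by [].
case: b; last by case: cl => _ HH; apply: HH => //.
have [z [zl Sz Ez]] := inj_surj (S := bit X) (f := mfg_mul c (mfg_val c l))
  (fun x hx Sx => conj (Tcl Vc (vl l) hx) (proj2 cl x hx l (ltn_ord l) Sx))
  (fun x y hx hy _ _ E => cancelL Vc (vl l) hx hy E) yl IH.
case: (finv_spec Vc (vl l)) => h1 h2 h3.
by rewrite -Ez -(Tassoc Vc) // h3 (fidL Vc).
Qed.

Lemma ext_bwd c : valid_mfg d c -> extends gen c -> Dsem wr v c -> extends genH c.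
Proof.
move=> Vc [phiG [glt gM ggen]] [D1 D2].
have inSg : forall g, inS c d (phiG g).
  move=> g; case: (Hgen g) => w ->; rewrite (phi_word Vc glt gM).
  rewrite (@eq_weval _ _ _ (fun l : 'I_d => mfg_val c l)); last by move=> l; apply: ggen.
  exact: inS_word.
have Xfid : forall x, ((exists i : 'I_m, x = r i) \/
     (exists (j : 'I_p) (a : 'I_(k j) -> G), x = eval_word a (v j))) -> phiG x = fid c.
  move=> x [[i ->]|[j [a ->]]].
  - rewrite Hwr (phi_word Vc glt gM) -(D1 i); apply: eq_weval => l; exact: ggen.
  - rewrite (phi_word Vc glt gM).
    pose a' := fun x => odflt 0 (omap (fun l : 'I_(k j) => phiG (a l)) (insub x)).
    transitivity (weval c (fun l : 'I_(k j) => a' l) (v j)).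
      by apply: eq_weval => l; rewrite /a' valK.
    apply: D2.
    + move=> y hy; rewrite /a'; case: insubP => [l _ _|] /=; [exact: glt | by rewrite hy].
    + move=> y hy; rewrite /a'; case: insubP => [l _ _|] /=; [exact: inSg | by rewrite hy].
have fidfid : finv c (fid c) = fid c.
  by apply: (finv_uniq Vc); [exact: fid_lt Vc | exact: fid_lt Vc | rewrite (fidL Vc) //; exact: fid_lt Vc].
have NC : forall g, in_normal_closure
       (fun x : G => (exists i : 'I_m, x = r i) \/
                     (exists (j : 'I_p) (a : 'I_(k j) -> G), x = eval_word a (v j))) g ->
     phiG g = fid c.
  move=> g [l [Hl ->]]; elim: l Hl => [|[[x y] b] l IH] Hl.
    by have := phi1 Vc glt gM.
  have hx : phiG x = fid c by apply: Xfid; exact: (Hl (x, y, b) (mem_head _ _)).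
  have hz : phiG (if b then x^-1 else x) = fid c.
    by case: (b) => //; rewrite (phiV Vc glt gM) hx.
  have IH' : phiG (foldr (fun t acc => ((if t.2 then (t.1.1)^-1 else t.1.1) ^ t.1.2) * acc) 1 l) = fid c.
    by apply: IH => t ht; apply: Hl; rewrite inE ht orbT.
  rewrite [foldr _ _ _]/= gM IH' (fidR Vc) ?glt //.
  rewrite conjgE gM gM hz (fidL Vc) ?glt // (phiV Vc glt gM).
  by case: (finv_spec Vc (glt y)).
have Hpre : forall h, exists g, pi g == h by move=> h; case: (surj h) => g <-; exists g.
pose pre := fun h => xchoose (Hpre h).
have preE : forall h, pi (pre h) = h by move=> h; exact: (eqP (xchooseP (Hpre h))).
have wd : forall g g', pi g = pi g' -> phiG g = phiG g'.
  move=> g g' E.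
  have : phiG (g^-1 * g') = fid c.
    by apply: NC; apply/ker; rewrite piM piV E mulVg.
  rewrite gM (phiV Vc glt gM) => E2.
  have := f_equal (mfg_mul c (phiG g)) E2.
  rewrite -(Tassoc Vc) ?glt //; last by case: (finv_spec Vc (glt g)).
  case: (finv_spec Vc (glt g)) => _ -> _; rewrite (fidL Vc) ?glt // (fidR Vc) ?glt //.
exists (fun h => phiG (pre h)); split.
- by move=> h; exact: glt.
- move=> x y; rewrite -gM; apply: wd; by rewrite piM !preE.
- move=> i; rewrite -ggen; apply: wd; by rewrite preE.
Qed.

Lemma ext_iff c : valid_mfg d c -> (extends genH c <-> extends gen c /\ Dsem wr v c).
Proof.
move=> Vc; split; first exact: ext_fwd.
by case; apply: ext_bwd.
Qed.

End Main.

Lemma pcs2 xs g1 g2 ys : pcs xs [:: g1; g2] ys ->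
  exists y1 y2, [/\ ys = [:: y1; y2], pc g1 xs y1 & pc g2 xs y2].
Proof.
case: ys => [|y1 [|y2 [|y3 ys]]]; cbn [pcs]; try tauto.
by case=> h1 [h2 _]; exists y1, y2.
Qed.

Lemma pcs1 xs g1 ys : pcs xs [:: g1] ys -> exists y1, ys = [:: y1] /\ pc g1 xs y1.
Proof.
case: ys => [|y1 [|y2 ys]]; cbn [pcs]; try tauto.
by case=> h1 _; exists y1.
Qed.

Lemma ok_pc e xs y : pc (compile e) xs y -> y = den e (nth 0 xs).
Proof. by move=> h; apply: pc_det h (compile_ok e xs). Qed.

Section Progs.
Variable Dx : exp.
Local Notation Dv c := (den Dx (nth 0 [:: c])).

Definition PADD := compile (Add (EVar 0) (EVar 1)).
Definition progCFQ pG := PComp PADD [:: pG; compile (Not Dx)].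
Definition QR := PComp (PRec PZero DIV) [:: compile (Not Dx); PProj 0].
Definition progReFQ pG := PComp PZero [:: pG; QR].
Definition progCo pG := PComp (PRec PZero (PComp pG [:: PProj 2])) [:: compile (Sg Dx); PProj 0].

Lemma progCFQ_ok pG c b0 : outputs pG c b0 ->
  outputs (progCFQ pG) c (b0 + (Dv c == 0)).
Proof.
move=> h; apply/pc_comp; exists [:: b0; (Dv c == 0) : nat]; split.
  split => //; split => //.
  by have := compile_ok (Not Dx) [:: c]; rewrite den_not.
have := compile_ok (Add (EVar 0) (EVar 1)) [:: b0; (Dv c == 0) : nat].
rewrite den_add !den_var; exact.
Qed.

Lemma QR_halts c : (exists y, pc QR [:: c] y) <-> Dv c != 0.
Proof.
split.
- case=> y /pc_comp [ys [/pcs2 [y1 [y2 [-> h1 h2]]] h]].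
  move/ok_pc: h1; rewrite den_not => E.
  apply/negP => /eqP D0; move: E h; rewrite D0 /= => ->.
  case/pc_recS => y' [_ /DIV_diverges] //.
- move=> D; exists 0; apply/pc_comp; exists [:: 0; c]; split.
    split; last by split => //; exact: (pc_proj 0 [:: c]).
    by have := compile_ok (Not Dx) [:: c]; rewrite den_not (negbTE D).
  by apply/pc_rec0; exact: pc_zero.
Qed.

Lemma progReFQ_ok pG c : halts (progReFQ pG) c <-> halts pG c /\ Dv c != 0.
Proof.
split.
- case=> y /pc_comp [ys [/pcs2 [y1 [y2 [_ h1 h2]]] _]].
  by split; [exists y1 | apply/QR_halts; exists y2].
- case=> [[y1 h1] /QR_halts [y2 h2]]; exists 0; apply/pc_comp; exists [:: y1; y2].
  by split; [split => //; split | exact: pc_zero].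
Qed.

Lemma progCo_ok pG c : halts (progCo pG) c <-> Dv c == 0 \/ halts pG c.
Proof.
have S : pcs [:: c] [:: compile (Sg Dx); PProj 0] [:: (Dv c != 0) : nat; c].
  split; last by split => //; exact: (pc_proj 0 [:: c]).
  by have := compile_ok (Sg Dx) [:: c]; rewrite den_sg.
split.
- case=> y /pc_comp [ys [/pcs2 [y1 [y2 [-> h1 h2]]] h]].
  move/ok_pc: h1; rewrite den_sg => E.
  have E2 : y2 = c by apply: pc_det h2 (pc_proj 0 [:: c]).
  case: (boolP (Dv c == 0)) => D; first by left.
  right; move: E h; rewrite E2 D /= => ->.
  case/pc_recS => y' [_ /pc_comp [zs [/pcs1 [z [-> hz]] hg]]].
  have : z = c by apply: pc_det hz (pc_proj 2 [:: 0; y'; c]).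
  by move=> Ez; exists y; rewrite -Ez.
- case=> [D|[y hy]].
  + exists 0; apply/pc_comp; exists [:: (Dv c != 0) : nat; c]; split => //.
    by rewrite D /=; apply/pc_rec0; exact: pc_zero.
  + case: (boolP (Dv c == 0)) => D.
      exists 0; apply/pc_comp; exists [:: (Dv c != 0) : nat; c]; split => //.
      by rewrite D /=; apply/pc_rec0; exact: pc_zero.
    exists y; apply/pc_comp; exists [:: (Dv c != 0) : nat; c]; split => //.
    rewrite D /=; apply/pc_recS; exists 0; split; first by apply/pc_rec0; exact: pc_zero.
    apply/pc_comp; exists [:: c]; split => //; split => //.
    exact: (pc_proj 2 [:: 0; 0; c]).
Qed.
End Progs.

Local Open Scope group_scope.

Theorem mainTheorem11 (G H : groupType) (pi : G -> H)
    (m : nat) (r : 'I_m -> G)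
    (p : nat) (k : 'I_p -> nat) (v : forall j : 'I_p, word (k j)) :
  finitely_generated G ->
  multiplicative_map pi ->
  (forall h : H, exists g : G, pi g = h) ->
  (forall g : G, pi g = 1 <->
     in_normal_closure
       (fun x : G => (exists i : 'I_m, x = r i) \/
                     (exists (j : 'I_p) (a : 'I_(k j) -> G), x = eval_word a (v j)))
       g) ->
  [/\ CFQ G -> CFQ H, ReFQ G -> ReFQ H & coReFQ G -> coReFQ H].
Proof.
move=> _ piM surj ker.
have Setup : forall d (gen : 'I_d -> G), generates gen ->
  exists wr : 'I_m -> word d, forall i, r i = eval_word gen (wr i).
  move=> d gen Hgen.
  have Hw : forall i, exists w, r i == eval_word gen w.
    by move=> i; case: (Hgen (r i)) => w E; exists w; rewrite E.
  by exists (fun i => xchoose (Hw i)) => i; exact: (eqP (xchooseP (Hw i))).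
have DvE : forall d (wr : 'I_m -> word d) c,
    (den (Dexp wr v) (nth 0 [:: c]) != 0) <-> Dsem wr v c.
  by move=> d wr c; rewrite den_Dexp.
split.
- case=> d [gen [Hgen [pG HpG]]]; have [wr Hwr] := Setup d gen Hgen.
  exists d, (genH pi gen); split; first exact: genH_gen.
  exists (progCFQ (Dexp wr v) pG) => c Vc.
  case: (HpG c Vc) => b0 hb0 Eb0.
  exists (b0 + (den (Dexp wr v) (nth 0 [:: c]) == 0)); first exact: progCFQ_ok.
  rewrite (ext_iff piM surj ker Hgen Hwr Vc) -Eb0 -DvE.
  case: (den (Dexp wr v) (nth 0 [:: c]) == 0).
  + by rewrite addn1; split => // -[].
  + by rewrite addn0; split => [->|[]].
- case=> d [gen [Hgen [pG HpG]]]; have [wr Hwr] := Setup d gen Hgen.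
  exists d, (genH pi gen); split; first exact: genH_gen.
  exists (progReFQ (Dexp wr v) pG) => c Vc.
  by rewrite progReFQ_ok (ext_iff piM surj ker Hgen Hwr Vc) (HpG c Vc) DvE.
- case=> d [gen [Hgen [pG HpG]]]; have [wr Hwr] := Setup d gen Hgen.
  exists d, (genH pi gen); split; first exact: genH_gen.
  exists (progCo (Dexp wr v) pG) => c Vc.
  rewrite progCo_ok (ext_iff piM surj ker Hgen Hwr Vc) (HpG c Vc).
  split.
  + case=> [/eqP D|NE] [E Ds]; last exact: NE.
    by move/DvE: Ds; rewrite D.
  + move=> NE; case: (boolP (den (Dexp wr v) (nth 0 [:: c]) == 0)) => D; first by left.
    right => E; apply: NE; split => //; exact/DvE.
Qed.
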